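(* For all integers $n\ge 2$ and $0\le m\le n(n-1)$, the algebraic connectivity of $\mathbb G(n,m)$ equals $\lfloor \frac{m}{n-1}\rfloor$.
   Context: For integers $n\ge2$ and $0\le m\le n(n-1)$, $\mathbb G(n,m)$ is the simple directed graph on vertex set $\{1,\dots,n\}$ whose arc set is $\{(\lceil \frac{i}{n-1}\rceil,\ n-((i-1)\bmod n)) : i=1,\dots,m\}$, where an arc $(j,k)$ goes from $j$ to $k$ and $a\bmod b\in\{0,\dots,b-1\}$ is the remainder; these $m$ pairs are pairwise distinct pairs of distinct vertices (equivalently, $\mathbb G(n,0)$ is empty and $\mathbb G(n,m)$ is obtained from $\mathbb G(n,m-1)$ by adding the arc $(\lceil \frac{m}{n-1}\rceil, n-((m-1)\bmod n))$). The (in-degree) Laplacian of a directed graph is $L=D-A$, $D$ the diagonal matrix of in-degrees, $A_{ij}=1$ if $(j,i)$ is an arc and $0$ otherwise. The algebraic connectivity is the second smallest real part among the $n$ eigenvalues of $L$ counted with algebraic multiplicity. *)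

(* Defs.v *)
From HB Require Import structures.
From mathcomp Require Import all_boot all_order all_algebra all_field.
Set Implicit Arguments. Unset Strict Implicit. Unset Printing Implicit Defensive.
Import Order.TTheory GRing.Theory Num.Theory.
Local Open Scope ring_scope.

Definition ceil_div (a b : nat) : nat := ((a + b - 1) %/ b)%N.

(* (j, k) (vertices numbered 1..n) is an arc of G(n,m):
   exists i in {1..m} (written i = t+1, t : 'I_m) with
   j = ceil(i/(n-1)) and k = n - ((i-1) mod n). *)
Definition Garc (n m j k : nat) : bool :=
  [exists t : 'I_m, (j == ceil_div t.+1 (n - 1)) && (k == n - (t %% n))%N].

(* adjacency matrix: A i j = 1 iff (j, i) is an arc (0-based indices shifted to 1-based vertices) *)
Definition Gadj (n m : nat) : 'M[algC]_n :=
  \matrix_(i < n, j < n) (Garc n m j.+1 i.+1)%:R.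

Definition Glap (n m : nat) : 'M[algC]_n :=
  \matrix_(i < n, j < n)
    ((i == j)%:R * (\sum_(k < n) Gadj n m i k) - Gadj n m i j).

Definition is_spectrum (n : nat) (M : 'M[algC]_n) (s : seq algC) : Prop :=
  char_poly M = \prod_(x <- s) ('X - x%:P).

Definition second_smallest_re (s : seq algC) : algC :=
  nth 0 (sort <=%R (map (fun x => 'Re x) s)) 1.

(* Main.v *)
Require Import Defs.
From mathcomp Require Import all_boot all_order all_algebra all_field.
From mathcomp Require Import fingroup perm zify.
Import Order.TTheory GRing.Theory Num.Theory.

Local Open Scope ring_scope.

Lemma det_special (R : comNzRingType) n (A : 'M[R]_n) (a : 'I_n) (c : nat) :
  (forall i j, i != j -> A i j != 0 -> (i == a) || (val j == c)) ->
  (forall i, i != a -> A i a = 0) ->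
  \det A = \prod_i A i i.
Proof.
move=> H1 H2.
rewrite /determinant (bigD1 (1%g : {perm 'I_n})) //= odd_perm1 expr0 mul1r.
under eq_bigr do rewrite perm1.
rewrite [X in _ + X]big1 ?addr0 // => s Hs.
case: (boolP [forall i, A i (s i) != 0]) => [/forallP Hall | ].
  exfalso; move/eqP: Hs; apply; apply/permP => x; rewrite perm1.
  have sa : s a = a.
    apply/eqP/negPn/negP => Hne.
    set i := (s^-1)%g a.
    have si : s i = a by rewrite /i permKV.
    have ia : i != a by apply: contra Hne => /eqP e; rewrite -{1}e si.
    by have := Hall i; rewrite si H2 // eqxx.
  apply/eqP/negPn/negP => Hx.
  have xa : x != a by apply: contra Hx => /eqP ->; rewrite sa.
  have := H1 x (s x); rewrite eq_sym Hx Hall (negbTE xa) /= => /(_ isT isT) Hc.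
  set y := s x in Hc.
  have ya : y != a by apply: contra xa => /eqP e; rewrite -sa in e; rewrite (perm_inj e).
  have yy : s y != y by apply/eqP => e; move/eqP: Hx; apply; exact: perm_inj e.
  have := H1 y (s y); rewrite eq_sym yy Hall (negbTE ya) /= => /(_ isT isT) Hc'.
  move: yy; rewrite -val_eqE /=.
  by rewrite (eqP Hc) (eqP Hc') eqxx.
rewrite negb_forall => /existsP [i]; rewrite negbK => /eqP Hi.
by rewrite (bigD1 i) //= Hi mul0r mulr0.
Qed.

Local Close Scope ring_scope.

Set Implicit Arguments. Unset Strict Implicit.


Definition garc n m (j i : nat) : bool := Garc n m j.+1 i.+1.

Lemma divmodE d x Q R : R < d -> x = Q * d + R -> x %/ d = Q /\ x %% d = R.
Proof.
move=> HR ->; have d0 : 0 < d by case: d HR.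
by split; [rewrite divnMDl // divn_small ?addn0 | rewrite modnMDl modn_small].
Qed.

Lemma arcP n m j i : 2 <= n -> i < n ->
  garc n m j i = [exists t : 'I_m, (t %/ (n-1) == j) && (i == n - 1 - t %% n)].
Proof.
move=> n2 ilt; rewrite /garc /Garc /ceil_div; apply: eq_existsb => t.
have -> : (t.+1 + (n - 1) - 1 = 1 * (n-1) + t)%N by lia.
rewrite divnMDl; last by lia.
rewrite add1n eqSS eq_sym; congr (_ && _).
have := ltn_pmod t (ltnW n2); move: (t %% n) => u ul.
apply/eqP/eqP; lia.
Qed.

Lemma arc_irr n m i : 2 <= n -> i < n -> garc n m i i = false.
Proof.
move=> n2 il; rewrite arcP //; apply/existsP => -[t /andP [/eqP h1 /eqP h2]].
have e1 := divn_eq t (n-1). have e2 := divn_eq t n.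
have l1 := ltn_pmod t (ltnW n2). have l2 : t %% (n-1) < n-1 by apply: ltn_pmod; lia.
move: h1 h2 e1 e2 l1 l2; move: (t %/ (n-1)) (t %% (n-1)) (t %/ n) (t %% n) => Q s P u.
move: (nat_of_ord t) => tt.
move=> h1 h2 e1 e2 l1 l2.
have key : Q * n + s + 1 = (P + 1) * n by nia.
case: (leqP Q P) => hQ.
  have : Q * n <= P * n by rewrite leq_mul2r hQ orbT.
  nia.
have : (P+1) * n <= Q * n by rewrite leq_mul2r addn1 hQ orbT.
nia.
Qed.

Lemma arc_gt n m j i : 2 <= n -> i < n -> m %/ (n-1) < j -> garc n m j i = false.
Proof.
move=> n2 il hj; rewrite arcP //; apply/existsP => -[t /andP [/eqP h1 _]].
have : t %/ (n-1) <= m %/ (n-1) by apply: leq_div2r; apply: ltnW.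
lia.
Qed.

Lemma arc_lt n m j i : 2 <= n -> i < n -> j < n -> j < m %/ (n-1) -> i != j -> garc n m j i.
Proof.
move=> n2 il jl hj hij; rewrite arcP //.
have hq : m %/ (n-1) * (n-1) <= m := leq_trunc_div m (n-1).
have jn : (j+1) * (n-1) <= m %/ (n-1) * (n-1) by rewrite leq_mul2r addn1 hj orbT.
case: (ltnP i j) => hij'.
  have tm : j * n - 1 - i < m by nia.
  apply/existsP; exists (Ordinal tm) => /=.
  have a1 : j - 1 - i < n - 1 by lia.
  have a2 : j * n - 1 - i = j * (n-1) + (j - 1 - i) by nia.
  have a3 : n - 1 - i < n by lia.
  have a4 : j * n - 1 - i = (j - 1) * n + (n - 1 - i) by nia.
  have [-> _] := divmodE a1 a2.
  have [_ ->] := divmodE a3 a4.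
  rewrite eqxx /=; apply/eqP; lia.
have tm : j * n + n - 1 - i < m by nia.
apply/existsP; exists (Ordinal tm) => /=.
have a1 : n - 1 - i + j < n - 1 by have : i != j := hij; lia.
have a2 : j * n + n - 1 - i = j * (n-1) + (n - 1 - i + j) by nia.
have a3 : n - 1 - i < n by lia.
have a4 : j * n + n - 1 - i = j * n + (n - 1 - i) by nia.
have [-> _] := divmodE a1 a2.
have [_ ->] := divmodE a3 a4.
rewrite eqxx /=; apply/eqP; lia.
Qed.

Lemma arc_card n m : 2 <= n ->
  #|[set i : 'I_n | garc n m (m %/ (n-1)) i]| <= m %% (n-1).
Proof.
case: n => // n' n2.
set q := m %/ (n'.+1 - 1); set r := m %% (n'.+1 - 1).
pose g (s : 'I_r) : 'I_n'.+1 := inord (n'.+1 - 1 - (q * (n'.+1 - 1) + s) %% n'.+1).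
apply: (@leq_trans #|[set g s | s : 'I_r]|); last by rewrite (leq_trans (leq_imset_card _ _)) // card_ord.
apply: subset_leq_card; apply/subsetP => i; rewrite inE arcP // => /existsP [t /andP [/eqP h1 /eqP h2]].
have em := divn_eq m (n'.+1 - 1); have et := divn_eq t (n'.+1 - 1).
have sr : t %% (n'.+1 - 1) < r.
  have tl := ltn_ord t; rewrite h1 in et; rewrite /r; move: em et tl; rewrite -/q.
  move: (nat_of_ord t) (t %% (n'.+1 - 1)) (m %% (n'.+1 - 1)) => tt a b; nia.
apply/imsetP; exists (Ordinal sr) => //.
apply/val_inj; rewrite /g /= inordK; last by lia.
by rewrite h2 -h1 -et.
Qed.

Unset Implicit Arguments. Set Strict Implicit.

Local Open Scope ring_scope.

Definition Mg {N} (L : 'M[algC]_N.+1) : 'M[algC]_N.+1 :=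
  \matrix_(i, j) (if j == ord0 then 0 else if i == ord0 then L ord0 j
                   else L i j - L ord0 j).

Definition Pm N : 'M[algC]_N.+1 :=
  \matrix_(i, j) ((i == j) || ((j == ord0) && (i != ord0)))%:R.

Lemma Glap_rowsum n m i : \sum_j Glap n m i j = 0.
Proof.
rewrite /Glap; under eq_bigr do rewrite mxE.
rewrite sumrB; apply/eqP; rewrite subr_eq0; apply/eqP.
rewrite (bigD1 i) //= eqxx mul1r [X in _ + X]big1 ?addr0 // => j /negPf; rewrite eq_sym => ->.
by rewrite mul0r.
Qed.

Lemma LP N (L : 'M[algC]_N.+1) : (forall i, \sum_j L i j = 0) ->
  L *m Pm N = Pm N *m Mg L.
Proof.
move=> Hrow; apply/matrixP => i j; rewrite !mxE.
under eq_bigr do rewrite /Pm mxE.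
under [RHS]eq_bigr do rewrite /Mg !mxE.
case: (eqVneq j ord0) => [-> | jn0].
  rewrite [RHS]big1; last by move=> k _; rewrite mulr0.
  rewrite -[RHS](Hrow i); apply: eq_bigr => k _.
  by case: (eqVneq k ord0) => [->|kn]; rewrite ?orbT ?mulr1 // orbT mulr1.
rewrite (bigD1 j) //= eqxx /= mulr1 big1 ?addr0; last first.
  by move=> k /negPf kj; rewrite orbF kj mulr0.
case: (eqVneq i ord0) => [-> | in0].
  rewrite (bigD1 ord0) //= big1 ?addr0 => [|k kn].
    by rewrite mul1r.
  by rewrite andbF orbF eq_sym (negPf kn) mul0r.
rewrite (bigD1 i) //= (bigD1 ord0) 1?eq_sym //= big1 ?addr0 => [|k /andP [ki kn]].
  have -> : (ord0 == i) = false by rewrite eq_sym (negPf in0).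
  by rewrite eqxx /= !mul1r subrK.
by rewrite eq_sym (negPf ki) (negPf kn) /= mul0r.
Qed.

Lemma char_poly_sim N (L M P : 'M[algC]_N.+1) :
  L *m P = P *m M -> \det P = 1 -> char_poly L = char_poly M.
Proof.
move=> H dP; rewrite /char_poly.
have : char_poly_mx L *m map_mx polyC P = map_mx polyC P *m char_poly_mx M.
  by rewrite /char_poly_mx mulmxBl mulmxBr -!map_mxM H scalar_mxC.
move/(congr1 determinant); rewrite !det_mulmx det_map_mx dP rmorph1 mulr1 mul1r.
done.
Qed.

Lemma detPm N : \det (Pm N) = 1.
Proof.
rewrite det_trig; last first.
  apply/is_trig_mxP => i j lij; rewrite mxE.
  have -> : (i == j) = false by apply/negbTE; rewrite neq_ltn lij.
  case: (eqVneq j ord0) => [e|] //=; move: lij; rewrite e.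
  by [].
by rewrite big1 // => i _; rewrite mxE eqxx.
Qed.

Local Close Scope ring_scope.

Lemma sum_lt_q n q : q <= n -> \sum_(k < n) (k < q) = q.
Proof.
move=> qn.
have -> : \sum_(k < n) (k < q) = \sum_(k < n | k < q) 1.
  by rewrite [RHS]big_mkcond; apply: eq_bigr => k _; case: (k < q).
by rewrite -(big_ord_widen n (fun _ => 1) qn) sum1_card card_ord.
Qed.

Lemma sum_eq_i n q (i : 'I_n) : \sum_(k < n) ((k == i) && (k < q)) = (i < q).
Proof. by rewrite (bigD1 i) //= eqxx big1 ?addn0 // => k /negPf ->. Qed.

Lemma arc_split n m (k i : 'I_n) : 2 <= n ->
  garc n m k i = (((k < m %/ (n-1)) && (k != i)) + ((k == m %/ (n-1) :> nat) && garc n m (m %/ (n-1)) i))%N :> nat.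
Proof.
move=> n2; case: (ltngtP k (m %/ (n-1))) => hk /=.
- case: (eqVneq k i) => [->|ki]; first by rewrite arc_irr.
  rewrite (arc_lt n2 (ltn_ord i) (ltn_ord k) hk); last by rewrite eq_sym.
  by [].
- by rewrite arc_gt // gtn_eqF.
- by rewrite hk.
Qed.

Lemma dg_formula n m (i : 'I_n) : 2 <= n -> m %/ (n-1) <= n -> i != 0 :> nat ->
  (\sum_(k < n) garc n m k i + garc n m i 0)%N =
  (m %/ (n-1) + \sum_(k < n) ((k == m %/ (n-1) :> nat) && garc n m (m %/ (n-1)) i)
    + ((i == m %/ (n-1) :> nat) && garc n m (m %/ (n-1)) 0))%N.
Proof.
move=> n2 qn in0; set q := m %/ (n-1).
rewrite (eq_bigr _ (fun k _ => arc_split n m k i n2)) big_split /=.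
have e1 : (\sum_(k < n) ((k < q) && (k != i)) + (i < q) = q)%N.
  rewrite -(sum_eq_i _ q i) -big_split /= -[RHS](sum_lt_q _ _ qn); apply: eq_bigr => k _.
  by case: (eqVneq k i) => [->|]; rewrite ?andbF ?andbT ?addn0 //= ?andbT ?andbF ?addn0.
have e2 : garc n m i 0 = ((i < q) + ((i == q :> nat) && garc n m q 0))%N :> nat.
  have n0 : 0 < n by lia.
  have := arc_split n m i (Ordinal n0) n2; rewrite /= -/q => ->.
  by rewrite -val_eqE /= in0 andbT.
rewrite e2; move: e1; rewrite /q; move: (m %/ (n-1)) => Q.
set S1 := \sum_(k < n) _; set S2 := \sum_(k < n) _.
move: (garc n m Q 0) (i < Q) (i == Q :> nat) => b c d; clearbody S1 S2; lia.
Qed.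


Local Open Scope ring_scope.

Lemma Gadj_E n m (i j : 'I_n) : Gadj n m i j = (garc n m j i)%:R.
Proof. by rewrite /Gadj mxE. Qed.

Lemma Glap_off n m (i j : 'I_n) : i != j -> Glap n m i j = - (garc n m j i)%:R.
Proof. by move=> /negPf ij; rewrite /Glap mxE ij mul0r sub0r Gadj_E. Qed.

Lemma Glap_diag n m (i : 'I_n) : (2 <= n)%N ->
  Glap n m i i = (\sum_(k < n) garc n m k i)%:R.
Proof.
move=> n2; rewrite /Glap mxE eqxx mul1r natr_sum.
rewrite Gadj_E arc_irr // subr0; apply: eq_bigr => k _; by rewrite Gadj_E.
Qed.

Lemma Mg_diag N m (i : 'I_N.+1) : (2 <= N.+1)%N -> i != ord0 ->
  Mg (Glap N.+1 m) i i = (\sum_(k < N.+1) garc N.+1 m k i + garc N.+1 m i 0)%N%:R.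
Proof.
move=> n2 in0; rewrite /Mg mxE (negPf in0) Glap_diag // Glap_off; last by rewrite eq_sym.
by rewrite opprK natrD.
Qed.

Lemma Mg_off N m (i j : 'I_N.+1) : (2 <= N.+1)%N -> i != j -> i != ord0 ->
  (j : nat) != (m %/ (N.+1 - 1))%N -> Mg (Glap N.+1 m) i j = 0.
Proof.
move=> n2 ij in0 jq; rewrite /Mg mxE (negPf in0).
case: (eqVneq j ord0) => [//|jn0].
rewrite !Glap_off //; last by rewrite eq_sym.
case: (ltngtP j (m %/ (N.+1 - 1))) => hj.
- have ij' : (i : nat) != j by [].
  have j0 : (0 : nat) != j by rewrite eq_sym; move: jn0; rewrite -val_eqE.
  have n0 : (0 < N.+1)%N by [].
  by rewrite (arc_lt n2 (ltn_ord i) (ltn_ord j) hj ij') (arc_lt n2 n0 (ltn_ord j) hj j0) subrr.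
- by rewrite !arc_gt // subrr.
- by rewrite hj eqxx in jq.
Qed.

Lemma cpmxE (R : comNzRingType) n (A : 'M[R]_n) i j :
  char_poly_mx A i j = 'X *+ (i == j) - (A i j)%:P.
Proof. by rewrite !mxE. Qed.

Lemma charM N m : (2 <= N.+1)%N ->
  char_poly (Mg (Glap N.+1 m)) = \prod_(i < N.+1) ('X - (Mg (Glap N.+1 m) i i)%:P).
Proof.
move=> n2; rewrite /char_poly (@det_special _ _ _ ord0 (m %/ (N.+1 - 1))).
- by apply: eq_bigr => i _; rewrite cpmxE eqxx mulr1n.
- move=> i j ij; rewrite cpmxE (negPf ij) mulr0n sub0r oppr_eq0 polyC_eq0.
  apply: contraR; rewrite negb_or => /andP [in0 jq].
  by rewrite Mg_off.
- by move=> i in0; rewrite cpmxE (negPf in0) mulr0n /Mg mxE eqxx subrr.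
Qed.

Local Close Scope ring_scope.

Lemma q_le_n n m : 2 <= n -> m <= n * (n-1) -> m %/ (n-1) <= n.
Proof.
move=> n2 hm; have := leq_div2r (n-1) hm; rewrite mulnK //; lia.
Qed.

Lemma dg_ge n m (i : 'I_n) : 2 <= n -> m <= n * (n-1) -> i != 0 :> nat ->
  m %/ (n-1) <= \sum_(k < n) garc n m k i + garc n m i 0.
Proof.
move=> n2 hm in0; rewrite (dg_formula n m i n2 (q_le_n _ _ n2 hm) in0).
by rewrite -addnA leq_addr.
Qed.

Lemma witness n m : 2 <= n -> m <= n * (n-1) ->
  exists i : 'I_n, (i != 0 :> nat) && (\sum_(k < n) garc n m k i + garc n m i 0 == m %/ (n-1)).
Proof.
move=> n2 hm; have qn := q_le_n _ _ n2 hm; set q := m %/ (n-1).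
have dgE := fun i => dg_formula n m i n2 qn.
case: (ltnP q n) => [qlt | qge].
  pose C := [set i : 'I_n | (i != q :> nat) && ~~ garc n m q i].
  have cardC : 0 < #|C|.
    have h1 := arc_card m n2.
    have h2 : #|[set i : 'I_n | (i == q :> nat)]| <= 1.
      rewrite -(cards1 (Ordinal qlt)); apply: subset_leq_card; apply/subsetP => i.
      by rewrite !inE -val_eqE.
    have h3 : C = ~: ([set i : 'I_n | (i == q :> nat)] :|: [set i : 'I_n | garc n m q i]).
      by apply/setP => i; rewrite !inE negb_or.
    have h4 := leq_of_leqif (leq_card_setU [set i : 'I_n | (i == q :> nat)] [set i : 'I_n | garc n m q i]).
    have h5 : m %% (n-1) < n - 1 by apply: ltn_pmod; lia.
    rewrite h3 cardsCs setCK card_ord; move: h1 h2 h4 h5; rewrite -/q.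
    move: #|_ :|: _| #|[set i : 'I_n | (i == q :> nat)]| #|[set i : 'I_n | garc n m q i]| => a b c; lia.
  have /set0Pn [i] : C != set0 by rewrite -card_gt0.
  rewrite inE => /andP [iq nai].
  have X0 : forall j : 'I_n, ~~ garc n m q j -> \sum_(k < n) ((k == q :> nat) && garc n m q j) = 0.
    by move=> j /negPf hj; rewrite big1 // => k _; rewrite hj andbF.
  case: (eqVneq (i : nat) 0) => [i0 | in0].
    have q0 : q != 0 by move: iq; rewrite i0 eq_sym.
    exists (Ordinal qlt); rewrite q0 /= (dgE (Ordinal qlt) q0) X0 /=; last by rewrite arc_irr.
    by rewrite -/q eqxx /= addn0; move: nai; rewrite i0 => /negPf ->; rewrite addn0.
  by exists i; rewrite in0 /= (dgE i in0) X0 // (negPf iq) /= !addn0.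
have n1 : 1 < n by [].
exists (Ordinal n1); rewrite /= (dgE (Ordinal n1) isT).
rewrite big1; last first.
  by move=> k _; rewrite (_ : (k == q :> nat) = false) //; apply/negbTE; rewrite neq_ltn (leq_trans (ltn_ord k) qge).
rewrite (_ : (1 == q) = false) ?addn0 //; apply/negbTE; by rewrite neq_ltn (leq_trans n1 qge).
Qed.


Local Open Scope ring_scope.

Lemma cnt (T:finType) (p : pred T) : count p (enum T) = #|p|.
Proof. by rewrite cardE -size_filter enumT /enum_mem; congr size; apply: eq_filter. Qed.

Theorem theorem4 (n m : nat) (hn : (2 <= n)%N) (hm : (m <= n * (n - 1))%N) :
  (exists s : seq algC, is_spectrum (Glap n m) s) /\
  (forall s : seq algC, is_spectrum (Glap n m) s ->
     second_smallest_re s = ((m %/ (n - 1))%N)%:R).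
Proof.
case: n hn hm => [|N] // hn hm.
set L := Glap N.+1 m; set M := Mg L.
have hrow : forall i, \sum_j L i j = 0 := Glap_rowsum _ _.
have hchar : char_poly L = \prod_(i < N.+1) ('X - (M i i)%:P).
  by rewrite (char_poly_sim _ _ _ _ (LP _ _ hrow) (detPm N)) (charM _ _ hn).
set s0 := [seq M i i | i <- enum 'I_N.+1].
have hs0 : is_spectrum L s0 by rewrite /is_spectrum hchar big_map big_enum.
split; first by exists s0.
move=> s hs.
have pe : perm_eq s s0 by apply: prod_XsubC_eq; rewrite -hs.
set q := (m %/ (N.+1 - 1))%N.
pose f (i : 'I_N.+1) := 'Re (M i i).
have f0 : f ord0 = 0 by rewrite /f /M /Mg mxE eqxx; exact: (Creal_ReP 0 (real0 _)).
have fi : forall i, i != ord0 -> f i = ((\sum_(k < N.+1) garc N.+1 m k i + garc N.+1 m i 0)%N)%:R.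
  by move=> i in0; rewrite /f /M Mg_diag //; apply/Creal_ReP; apply: realn.
have i0nat : forall i : 'I_N.+1, (i != ord0) = (i != 0%N :> nat) by move=> i; rewrite -val_eqE.
set l := sort <=%R (map (fun x => 'Re x) s).
have pl : perm_eq l (map f (enum 'I_N.+1)).
  rewrite /l perm_sort (_ : map f _ = map (fun x => 'Re x) s0); first exact: perm_map.
  by rewrite /s0; elim: (enum _) => //= a t ->.
have lreal : all (fun x => x \is Num.real) l.
  by rewrite /l; apply/allP => x; rewrite mem_sort => /mapP [y _ ->]; apply: Creal_Re.
have lsort : sorted <=%R l.
  rewrite /l; apply: (@sort_sorted_in _ (fun x => x \is Num.real)).
    by move=> x y xr yr; apply: real_leVge.
  by apply/allP => x /mapP [y _ ->]; apply: Creal_Re.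
have cntE : forall p, count p l = count p (map f (enum 'I_N.+1)) by move=> p; move/seq.permP: pl; apply.
have qreal : (q%:R : algC) \is Num.real by apply: realn.
have [w /andP [w0 wq]] := witness _ _ hn hm.
have cnt_le : (2 <= count (fun x : algC => (x <= q%:R)%R) l)%N.
  rewrite cntE count_map cnt.
  have wn0 : w != ord0 by rewrite i0nat.
  apply: (@leq_trans #|[set ord0; w]|); first by rewrite cards2 eq_sym wn0.
  apply: subset_leq_card; apply/subsetP => i.
  rewrite !inE => /orP [/eqP -> | /eqP ->] /=; first by rewrite f0 ler0n.
  by rewrite fi // (eqP wq).
have cnt_lt : (count (fun x : algC => (x < q%:R)%R) l <= 1)%N.
  rewrite cntE count_map cnt -(cards1 (ord0 : 'I_N.+1)); apply: subset_leq_card.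
  apply/subsetP => i; rewrite !inE /=; apply: contraLR => in0.
  by rewrite fi 1?i0nat // -real_leNgt ?realn // ler_nat dg_ge // -i0nat.
have : (1 < size l)%N by rewrite size_sort size_map (perm_size pe) size_map size_enum_ord.
rewrite /second_smallest_re -/l.
clear cntE pl; move: lsort lreal cnt_le cnt_lt; case: l => [|x0 [|x1 rest]] //= /andP [x01 prest].
move=> /and3P [x0r x1r _] cle clt _.
have minr := order_path_min (@le_trans _ _) prest.
apply/eqP; rewrite eq_le; apply/andP; split.
  rewrite real_leNgt //; apply/negP => qx1.
  have : count (fun x : algC => (x <= q%:R)%R) rest = 0%N.
    apply/eqP; rewrite -leqn0 leqNgt -has_count; apply/hasPn => y yr /=.
    have x1y : x1 <= y by move/allP: minr => /(_ y yr).
    by apply/negP => yq; have := lt_le_trans qx1 (le_trans x1y yq); rewrite ltxx.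
  move=> c0; move: cle; rewrite c0 addn0 (real_leNgt x1r qreal) qx1 /=; by case: (x0 <= _)%R.
rewrite real_leNgt //; apply/negP => x1q.
move: clt; rewrite x1q (le_lt_trans x01 x1q) /=.
by [].
Qed.

Local Close Scope ring_scope.
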